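(* Let $m,n\ge 2$, let $W'$ be a channel from $\{1,\dots,m\}$ to $\{1,2\}$, and let $W''$ be a channel from $\{1,2\}$ to $\{1,\dots,n\}$ with $W''_{1,*}\ne W''_{2,*}$; set $W=W'W''$. Let $\mathcal{S}$ be a finite set, $p_S$ a probability distribution on $\mathcal{S}$, and $K^{(s)}$ ($s\in\mathcal{S}$) channels from $\{1,\dots,m\}$ to $\{1,2\}$ such that $W'=\sum_{s\in\mathcal{S}}p_S(s)K^{(s)}$. Define the channel $V$ from the set $\{1,\dots,m\}^{\mathcal{S}}$ of maps $u:\mathcal{S}\to\{1,\dots,m\}$ to $\{1,\dots,n\}$ by $V_{u,*}=\big(\sum_{s}p_S(s)K^{(s)}_{u(s),*}\big)W''$, so that $C(V)$ is the capacity of the state-dependent channel $x,s\mapsto (K^{(s)}W'')_{x,*}$ with the state $S\sim p_S$ available causally at the encoder. Then $C(V)=C(W)$ (the causal state information at the encoder does not increase the capacity) if and only if there exist $i_1,i_2\in\{1,\dots,m\}$ such that every $K^{(s)}$ with $p_S(s)>0$ is $(i_1,i_2)$-ended.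
   Context: A channel from a finite set $A$ to a finite set $B$ is a row-stochastic matrix; $W_{x,*}$ denotes row $x$. For a probability distribution $\mu$ on the input set, $I(\mu,W)=\sum_x\mu_x D(W_{x,*}\|\mu W)$ (Kullback–Leibler divergence) and $C(W)=\max_\mu I(\mu,W)$. A channel $K$ from $\{1,\dots,m\}$ to $\{1,2\}$ is called $(i_1,i_2)$-ended if $K_{i_1,1}=\min_i K_{i,1}$ and $K_{i_2,1}=\max_i K_{i,1}$ (equivalently, all rows of $K$ lie on the segment from $K_{i_1,*}$ to $K_{i_2,*}$). *)

(* Defs.v *)
From HB Require Import structures.
From mathcomp Require Import all_boot all_order all_algebra.
From mathcomp Require Import all_classical all_reals all_analysis.
Set Implicit Arguments. Unset Strict Implicit. Unset Printing Implicit Defensive.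
Import Order.TTheory GRing.Theory Num.Theory.
Local Open Scope ring_scope.
Local Open Scope classical_set_scope.

Section Channels.
Variable R : realType.

Definition is_dist (A : finType) (mu : A -> R) : Prop :=
  (forall x, 0 <= mu x) /\ \sum_(x : A) mu x = 1.

Definition is_channel (A B : finType) (W : A -> B -> R) : Prop :=
  forall x, is_dist (W x).

Definition chan_comp (A B C : finType) (W1 : A -> B -> R) (W2 : B -> C -> R)
  : A -> C -> R := fun x z => \sum_(y : B) W1 x y * W2 y z.

Definition out_dist (A B : finType) (mu : A -> R) (W : A -> B -> R) : B -> R :=
  fun y => \sum_(x : A) mu x * W x y.

(* Kullback-Leibler divergence (natural log); used only where supp P is
   contained in supp Q, where this formula is exact (0 ln 0 = 0 since ln 0 = 0) *)
Definition KL (B : finType) (P Q : B -> R) : R :=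
  \sum_(y : B) P y * ln (P y / Q y).

Definition mutinf (A B : finType) (mu : A -> R) (W : A -> B -> R) : R :=
  \sum_(x : A) mu x * KL (W x) (out_dist mu W).

Definition capacity (A B : finType) (W : A -> B -> R) : R :=
  sup [set mutinf mu W | mu in [set mu : A -> R | is_dist mu]].

(* (i1,i2)-ended channel from 'I_m to 'I_2 (output "1" is ord0) *)
Definition ended (m : nat) (K : 'I_m -> 'I_2 -> R) (i1 i2 : 'I_m) : Prop :=
  (forall i, K i1 ord0 <= K i ord0) /\ (forall i, K i ord0 <= K i2 ord0).

End Channels.

(* Main.v *)
Require Import Defs.
From HB Require Import structures.
From mathcomp Require Import all_boot all_order all_algebra.
From mathcomp Require Import all_classical all_reals all_analysis.
From mathcomp Require Import ring lra.
Import Order.TTheory GRing.Theory Num.Theory.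
Local Open Scope ring_scope.

Section Aux.
Variable R : realType.
Implicit Types x y s q a b al : R.

Definition hh q x : R := x * ln (x / q).

Lemma ln_le_sub1 y : 0 < y -> ln y <= y - 1.
Proof.
move=> y0; have := @le_ln1Dx R (y - 1).
rewrite (_ : 1 + (y - 1) = y); last by ring.
apply; lra.
Qed.

Lemma ln_lt_sub1 y : 0 < y -> y != 1 -> ln y < y - 1.
Proof.
move=> y0 y1; rewrite -ltr_expR lnK ?posrE //.
have := @expR_gt1Dx R (y - 1).
rewrite (_ : 1 + (y - 1) = y); last by ring.
apply.
by rewrite subr_eq0.
Qed.

Lemma tangent_le x s : 0 <= x -> 0 < s -> x - s <= x * ln (x / s).
Proof.
move=> x0 s0; have [->|xp] := eqVneq x 0.
  by rewrite mul0r sub0r oppr_le0 ltW.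
have xp' : 0 < x by rewrite lt_neqAle eq_sym xp x0.
have := @ln_le_sub1 _ (divr_gt0 s0 xp').
rewrite !ln_div ?posrE // => H.
have : x * (ln s - ln x) <= x * (s / x - 1) by rewrite ler_pM2l.
rewrite (_ : x * (s / x - 1) = s - x); last by field; rewrite lt0r_neq0.
rewrite (_ : x * (ln x - ln s) = - (x * (ln s - ln x))); last by ring.
lra.
Qed.

Lemma tangent_lt x s : 0 <= x -> 0 < s -> x != s -> x - s < x * ln (x / s).
Proof.
move=> x0 s0 xs; have [->|xp] := eqVneq x 0.
  by rewrite mul0r sub0r oppr_lt0.
have xp' : 0 < x by rewrite lt_neqAle eq_sym xp x0.
have := @ln_lt_sub1 _ (divr_gt0 s0 xp').
rewrite !ln_div ?posrE // => H.
have : x * (ln s - ln x) < x * (s / x - 1).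
  rewrite ltr_pM2l // H //.
  by apply: contra xs => /eqP sx; rewrite -[s](divfK (lt0r_neq0 xp')) sx mul1r.
rewrite (_ : x * (s / x - 1) = s - x); last by field; rewrite lt0r_neq0.
rewrite (_ : x * (ln x - ln s) = - (x * (ln s - ln x))); last by ring.
lra.
Qed.

Lemma hh_decomp q s x : 0 <= x -> 0 < s -> 0 < q ->
  hh q x = hh s x + x * ln (s / q).
Proof.
move=> x0 s0 q0; rewrite /hh; have [->|xp] := eqVneq x 0; first by rewrite !mul0r addr0.
have xp' : 0 < x by rewrite lt_neqAle eq_sym xp x0.
rewrite !ln_div ?posrE //; ring.
Qed.

Lemma hh_self s : hh s s = 0.
Proof.
rewrite /hh; have [->|sp] := eqVneq s 0; first by rewrite mul0r.
by rewrite divff // ln1 mulr0.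
Qed.

Lemma hh0 x : hh 0 x = 0.
Proof. by rewrite /hh invr0 mulr0 ln0 // mulr0. Qed.

Lemma hh_x0 q : hh q 0 = 0.
Proof. by rewrite /hh mul0r. Qed.

Lemma jensen_le q a b al : 0 <= a -> 0 <= b -> 0 <= al <= 1 -> 0 <= q ->
  hh q (al * a + (1 - al) * b) <= al * hh q a + (1 - al) * hh q b.
Proof.
move=> a0 b0 /andP[al0 al1] q0.
have [->|qp] := eqVneq q 0; first by rewrite !hh0 !mulr0 addr0.
have q0' : 0 < q by rewrite lt_neqAle eq_sym qp q0.
have al0' : 0 <= 1 - al by rewrite subr_ge0.
set s := al * a + (1 - al) * b.
have t1 : 0 <= al * a by rewrite mulr_ge0.
have t2 : 0 <= (1 - al) * b by rewrite mulr_ge0.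
have [s0|sp] := eqVneq s 0.
  have := s0; rewrite /s => /eqP; rewrite (paddr_eq0 t1 t2) => /andP[/eqP e1 /eqP e2].
  by rewrite e1 e2 addr0 hh_x0 /hh !mulrA e1 e2 !mul0r addr0.
have s0' : 0 < s by rewrite lt_neqAle eq_sym sp addr_ge0.
rewrite (hh_decomp q s a a0 s0' q0') (hh_decomp q s b b0 s0' q0') (hh_decomp q s s (ltW s0') s0' q0') hh_self.
have := tangent_le a s a0 s0'; have := tangent_le b s b0 s0'.
rewrite /hh => Hb Ha.
have Ha' := ler_wpM2l al0 Ha.
have Hb' := ler_wpM2l al0' Hb.
rewrite /s in Ha' Hb' *.
set L := ln _ in Ha' Hb' *.
set A := a * ln (a / _) in Ha' Hb' *.
set B := b * ln (b / _) in Ha' Hb' *.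
nra.
Qed.


Lemma mix_pos a b al : 0 <= a -> 0 <= b -> 0 < al < 1 -> a != b ->
  0 < al * a + (1 - al) * b.
Proof.
move=> a0 b0 /andP[al0 al1] ab.
have al0' : 0 < 1 - al by rewrite subr_gt0.
have [a0e|ap] := eqVneq a 0.
  rewrite a0e in ab *.
  have bp : 0 < b by rewrite lt_neqAle ab b0.
  by rewrite mulr0 add0r mulr_gt0.


have ap' : 0 < a by rewrite lt_neqAle eq_sym ap a0.
by rewrite ltr_pwDl ?mulr_gt0 // mulr_ge0 // ltW.
Qed.

Lemma jensen_gap q a b al : 0 <= a -> 0 <= b -> 0 < q ->
  0 < al * a + (1 - al) * b ->
  al * hh q a + (1 - al) * hh q b - hh q (al * a + (1 - al) * b) =
  al * hh (al * a + (1 - al) * b) a + (1 - al) * hh (al * a + (1 - al) * b) b.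
Proof.
move=> a0 b0 q0 s0.
rewrite (hh_decomp q _ a a0 s0 q0) (hh_decomp q _ b b0 s0 q0) (hh_decomp q _ _ (ltW s0) s0 q0) hh_self.
ring.
Qed.

Lemma jensen_lt q a b al : 0 <= a -> 0 <= b -> 0 < al < 1 -> 0 < q -> a != b ->
  hh q (al * a + (1 - al) * b) < al * hh q a + (1 - al) * hh q b.
Proof.
move=> a0 b0 al01 q0 ab.
have s0 := mix_pos _ _ _ a0 b0 al01 ab.
case/andP: al01 => al0 al1.
rewrite -subr_gt0 (jensen_gap _ _ _ _ a0 b0 q0 s0).
set s := al * a + (1 - al) * b in s0 *.
have al0' : 0 < 1 - al by rewrite subr_gt0.
have as_ : a != s.
  apply: contra ab => /eqP ha; apply/eqP.
  have : (1 - al) * (b - a) = 0.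
    have -> : (1 - al) * (b - a) = s - a by rewrite /s; ring.
    by rewrite -ha subrr.
  by move/eqP; rewrite mulf_eq0 (negbTE (lt0r_neq0 al0')) /= subr_eq0 eq_sym => /eqP.
have Ha := tangent_lt a s a0 s0 as_.
have Hb := tangent_le b s b0 s0.
have Ha' : al * (a - s) < al * hh s a by rewrite ltr_pM2l.
have Hb' : (1 - al) * (b - s) <= (1 - al) * hh s b by rewrite ler_wpM2l // ltW.
have : al * (a - s) + (1 - al) * (b - s) = 0 by rewrite /s; ring.
lra.
Qed.

Variable B : finType.
Implicit Types l : R.

Definition Qf l r1 r2 (z : B) : R := l * r1 z + (1 - l) * r2 z.
Definition Jf l r1 r2 : R :=
  \sum_z (l * hh (Qf l r1 r2 z) (r1 z) + (1 - l) * hh (Qf l r1 r2 z) (r2 z)).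
Definition Gf r1 r2 : R :=
  sup [set Jf l r1 r2 | l in [set l : R | 0 <= l <= 1]].

Lemma Qf_ge0 l r1 r2 z : 0 <= l <= 1 -> 0 <= r1 z -> 0 <= r2 z -> 0 <= Qf l r1 r2 z.
Proof.
move=> /andP[l0 l1] a0 b0; rewrite /Qf addr_ge0 // mulr_ge0 // subr_ge0 //.
Qed.

Lemma J_ge0 {l r1 r2} : is_dist r1 -> is_dist r2 -> 0 <= l <= 1 -> 0 <= Jf l r1 r2.
Proof.
move=> [p1 _] [p2 _] l01; rewrite /Jf; apply: sumr_ge0 => z _.
have := jensen_le _ _ _ _ (p1 z) (p2 z) l01 (Qf_ge0 _ _ _ z l01 (p1 z) (p2 z)).
by rewrite -/(Qf l r1 r2 z) hh_self.
Qed.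

Lemma neg_xlnx {l} : 0 <= l <= 1 -> - (l * ln l) <= 1 - l.
Proof.
move=> /andP[l0 l1]; have [->|lp] := eqVneq l 0; first by rewrite mul0r oppr0; lra.
have lp' : 0 < l by rewrite lt_neqAle eq_sym lp l0.
have := @ln_le_sub1 l^-1; rewrite invr_gt0 => /(_ lp').
rewrite lnV ?posrE // => H.
have := ler_wpM2l l0 H; rewrite mulrBr mulfV // mulr1; lra.
Qed.

Lemma J_le {l r1 r2} : is_dist r1 -> is_dist r2 -> 0 <= l <= 1 ->
  Jf l r1 r2 <= - (l * ln l) + l.
Proof.
move=> [p1 s1] [p2 s2] l01; have /andP[l0 l1] := l01.
have l0' : 0 <= 1 - l by rewrite subr_ge0.
have -> : - (l * ln l) + l = \sum_z (l * r1 z * (- ln l) + l * r2 z).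
  rewrite big_split /= -!mulr_suml -!mulr_sumr s1 s2; ring.
rewrite /Jf; apply: ler_sum => z _.
set Q := Qf l r1 r2 z; set a := r1 z; set b := r2 z.
have a0 : 0 <= a := p1 z; have b0 : 0 <= b := p2 z.
have Qa : l * a <= Q by rewrite /Q /Qf lerDl mulr_ge0.
have Qb : (1 - l) * b <= Q by rewrite /Q /Qf lerDr mulr_ge0.
apply: lerD.
  have [->|lp] := eqVneq l 0; first by rewrite !mul0r.
  have lp' : 0 < l by rewrite lt_neqAle eq_sym lp l0.
  have [ae|ap] := eqVneq a 0; first by rewrite ae hh_x0 !(mulr0, mul0r).
  have ap' : 0 < a by rewrite lt_neqAle eq_sym ap a0.
  have Qp : 0 < Q by apply: lt_le_trans Qa; rewrite mulr_gt0.
  rewrite /hh -mulrA ler_pM2l // ler_pM2l // ln_div ?posrE //.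
  have : ln (l * a) <= ln Q by rewrite ler_ln ?posrE ?mulr_gt0.
  rewrite lnM ?posrE //; lra.
have [e|lp] := eqVneq (1 - l) 0; first by rewrite e mul0r mulr_ge0.
have lp' : 0 < 1 - l by rewrite lt_neqAle eq_sym lp l0'.
have [be|bp] := eqVneq b 0; first by rewrite be hh_x0 !(mulr0, mul0r).
have bp' : 0 < b by rewrite lt_neqAle eq_sym bp b0.
have Qp : 0 < Q by apply: lt_le_trans Qb; rewrite mulr_gt0.
set u := b / Q.
have up : 0 < u by rewrite divr_gt0.
have uQ : u * Q = b by rewrite /u divfK // lt0r_neq0.
have Hl := @ln_le_sub1 u up.
have H1 : (1 - l) * u <= 1.
  have : (1 - l) * u * Q <= 1 * Q by rewrite mul1r -mulrA uQ.
  by rewrite ler_pM2r.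
rewrite /hh -/u.
have H2 : (1 - l) * b * ln u <= (1 - l) * b * (u - 1) by rewrite ler_pM2l // mulr_gt0.
nra.
Qed.

Lemma J_le1 {l r1 r2} : is_dist r1 -> is_dist r2 -> 0 <= l <= 1 -> Jf l r1 r2 <= 1.
Proof.
move=> d1 d2 l01; have := J_le d1 d2 l01; have := neg_xlnx l01; lra.
Qed.

Lemma G_ub {r1 r2} : is_dist r1 -> is_dist r2 ->
  has_ubound [set Jf l r1 r2 | l in [set l : R | 0 <= l <= 1]].
Proof. by move=> d1 d2; exists 1 => _ [l l01 <-]; exact: J_le1. Qed.

Lemma J_le_G {l r1 r2} : is_dist r1 -> is_dist r2 -> 0 <= l <= 1 -> Jf l r1 r2 <= Gf r1 r2.
Proof. by move=> d1 d2 l01; apply: ub_le_sup (G_ub d1 d2) _ _; exists l. Qed.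

Lemma G_le r1 r2 c : (forall l, 0 <= l <= 1 -> Jf l r1 r2 <= c) -> Gf r1 r2 <= c.
Proof.
move=> H; apply: ge_sup; first by exists (Jf 0 r1 r2), 0 => //=; rewrite lexx ler01.
by move=> _ [l l01 <-]; apply: H.
Qed.


Lemma Jsym l r1 r2 : Jf l r1 r2 = Jf (1 - l) r2 r1.
Proof.
rewrite /Jf; apply: eq_bigr => z _.
have -> : Qf (1 - l) r2 r1 z = Qf l r1 r2 z by rewrite /Qf; ring.
rewrite (_ : 1 - (1 - l) = l); last by ring.
by rewrite addrC.
Qed.

Lemma Gsym r1 r2 : Gf r1 r2 = Gf r2 r1.
Proof.
have e l : 1 - (1 - l) = l :> R by ring.
rewrite /Gf; congr sup; apply/seteqP; split => _ [l H <-]; move: H; rewrite /= => /andP[l0 l1].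
  exists (1 - l); last by rewrite Jsym e.
  by rewrite /=; apply/andP; split; lra.
exists (1 - l); last by rewrite Jsym e.
by rewrite /=; apply/andP; split; lra.
Qed.

Lemma Jself l r : Jf l r r = 0.
Proof.
rewrite /Jf big1 // => z _.
have -> : Qf l r r z = r z by rewrite /Qf; ring.
by rewrite hh_self !mulr0 addr0.
Qed.

Lemma G_self r : Gf r r = 0.
Proof.
apply/le_anti/andP; split.
  by apply: G_le => l _; rewrite Jself.
rewrite /Gf; apply: ub_le_sup.
  by exists 0 => _ [l _ <-]; rewrite Jself.
by exists 0; rewrite /= ?lexx ?ler01 ?Jself.
Qed.

Lemma J_term_ge0 l r1 r2 z : is_dist r1 -> is_dist r2 -> 0 <= l <= 1 ->
  0 <= l * hh (Qf l r1 r2 z) (r1 z) + (1 - l) * hh (Qf l r1 r2 z) (r2 z).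
Proof.
move=> [p1 _] [p2 _] l01.
have := jensen_le _ _ _ _ (p1 z) (p2 z) l01 (Qf_ge0 _ _ _ z l01 (p1 z) (p2 z)).
by rewrite -/(Qf l r1 r2 z) hh_self.
Qed.

Lemma Gpos r1 r2 z0 : is_dist r1 -> is_dist r2 -> r1 z0 != r2 z0 -> 0 < Gf r1 r2.
Proof.
move=> d1 d2 ne.
have h01 : 0 <= (2^-1 : R) <= 1 by apply/andP; split; lra.
have h01' : 0 < (2^-1 : R) < 1 by apply/andP; split; lra.
apply: lt_le_trans (J_le_G d1 d2 h01).
rewrite /Jf (bigD1 z0) //=.
have [p1 _] := d1; have [p2 _] := d2.
have Tz : 0 < 2^-1 * hh (Qf 2^-1 r1 r2 z0) (r1 z0) + (1 - 2^-1) * hh (Qf 2^-1 r1 r2 z0) (r2 z0).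
  have qp := mix_pos _ _ _ (p1 z0) (p2 z0) h01' ne.
  have := jensen_lt _ _ _ _ (p1 z0) (p2 z0) h01' qp ne.
  by rewrite -/(Qf 2^-1 r1 r2 z0) hh_self.
apply: (lt_le_trans Tz); rewrite lerDl; apply: sumr_ge0 => z _.
exact: J_term_ge0.
Qed.


Lemma xlnx_mono l l0 : 0 <= l -> l <= l0 -> l0 <= 1 ->
  - (l * ln l) <= - (l0 * ln l0) + l0.
Proof.
move=> l_ge0 ll0 l01.
have l00 : 0 <= l0 := le_trans l_ge0 ll0.
have Hl0 : ln l0 <= 0 := ln_le0 l01.
have [->|lp] := eqVneq l 0.
  rewrite mul0r oppr0; have : l0 * ln l0 <= 0 by rewrite mulr_ge0_le0.
  lra.
have lp' : 0 < l by rewrite lt_neqAle eq_sym lp l_ge0.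
have l0p : 0 < l0 := lt_le_trans lp' ll0.
have := @ln_le_sub1 (l0 / l) (divr_gt0 l0p lp').
rewrite ln_div ?posrE // => H.
have H1 := ler_wpM2l l_ge0 H.
rewrite (_ : l * (l0 / l - 1) = l0 - l) in H1; last by field; rewrite lt0r_neq0.
have H2 : (l0 - l) * ln l0 <= 0 by rewrite mulr_ge0_le0 // subr_ge0.
nra.
Qed.

Lemma small_u (u : R) : 0 < u -> u <= 2^-1 ->
  - ((u * u) * ln (u * u)) + 2 * (u * u) <= 3 * u.
Proof.
move=> u0 u1; rewrite lnM ?posrE //.
have H : - (u * ln u) <= 1 - u by apply: neg_xlnx; apply/andP; split; lra.
have H' := ler_wpM2l (ltW u0) H.
nra.
Qed.

Lemma Gstrict r1 r2 w1 z0 al : is_dist r1 -> is_dist r2 -> r1 z0 != r2 z0 ->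
  0 < al < 1 -> (forall z, w1 z = al * r1 z + (1 - al) * r2 z) ->
  Gf w1 r2 < Gf r1 r2.
Proof.
move=> d1 d2 ne al01 hs.
have [p1 S1] := d1; have [p2 S2] := d2.
have /andP[al0 al1] := al01.
have ds : is_dist w1.
  split=> [z|]; first by rewrite hs addr_ge0 // mulr_ge0 // ?subr_ge0 // ltW.
  under eq_bigr do rewrite hs.
  by rewrite big_split /= -!mulr_sumr S1 S2; ring.
set G' := Gf r1 r2.
have s0 : 0 < w1 z0 by rewrite hs; exact: mix_pos.
set dl := al * hh (w1 z0) (r1 z0) + (1 - al) * hh (w1 z0) (r2 z0).
have dlp : 0 < dl.
  have := jensen_lt _ _ _ _ (p1 z0) (p2 z0) al01 s0 ne.
  by rewrite -hs hh_self.
have claimA : forall l, 0 < l <= 1 -> Jf l w1 r2 + l * dl <= Jf (l * al) r1 r2.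
  move=> l /andP[lp l1].
  have la01 : 0 < l * al < 1 by apply/andP; split; nra.
  have la01' : 0 <= l * al <= 1 by apply/andP; split; nra.
  have eQ : forall z, Qf l w1 r2 z = Qf (l * al) r1 r2 z by move=> z; rewrite /Qf hs; ring.
  suff : l * dl <= Jf (l * al) r1 r2 - Jf l w1 r2 by lra.
  have -> : Jf (l * al) r1 r2 - Jf l w1 r2 = \sum_z l *
      (al * hh (Qf (l * al) r1 r2 z) (r1 z) + (1 - al) * hh (Qf (l * al) r1 r2 z) (r2 z)
       - hh (Qf (l * al) r1 r2 z) (w1 z)).
    by rewrite /Jf -sumrB; apply: eq_bigr => z _; rewrite eQ; ring.
  rewrite (bigD1 z0) //=.
  have qp : 0 < Qf (l * al) r1 r2 z0 by exact: mix_pos.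
  have Dz0 : al * hh (Qf (l * al) r1 r2 z0) (r1 z0) + (1 - al) * hh (Qf (l * al) r1 r2 z0) (r2 z0)
       - hh (Qf (l * al) r1 r2 z0) (w1 z0) = dl.
    rewrite [in hh _ (w1 z0)]hs jensen_gap //; first by rewrite -hs.
    by rewrite -hs.
  rewrite Dz0 lerDl; apply: sumr_ge0 => z _; apply: mulr_ge0; first exact: ltW.
  rewrite subr_ge0 hs; apply: jensen_le => //; first by apply/andP; split; exact: ltW.
  exact: Qf_ge0.
have dG : dl <= G'.
  have := claimA 1; rewrite ltr01 lexx !mul1r => /(_ isT) H.
  have := J_ge0 ds d2 (l := 1); rewrite ler01 lexx => /(_ isT) H0.
  have : Jf al r1 r2 <= G' by apply: J_le_G => //; apply/andP; split; exact: ltW.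
  lra.
set u := Num.min (2^-1 : R) (dl / 4).
have u0 : 0 < u by rewrite lt_min; apply/andP; split; [lra|rewrite divr_gt0].
have u1 : u <= 2^-1 by rewrite ge_min lexx.
have u2 : u <= dl / 4 by rewrite ge_min lexx orbT.
set l0 := u * u.
have l0p : 0 < l0 by rewrite mulr_gt0.
have l01 : l0 <= 1 by rewrite /l0; nra.
apply: (@le_lt_trans _ _ (Num.max (G' - l0 * dl) (3 * u))).
  apply: G_le => l /andP[lge0 lle1].
  have l01' : 0 <= l <= 1 by apply/andP; split.
  case: (leP l l0) => hl.
    rewrite le_max; apply/orP; right.
    have := J_le ds d2 l01'; have := xlnx_mono _ _ lge0 hl l01; have := small_u _ u0 u1.
    rewrite -/l0; lra.
  rewrite le_max; apply/orP; left.
  have lp : 0 < l := lt_trans l0p hl.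
  have := claimA l; rewrite lp lle1 => /(_ isT) H.
  have : Jf (l * al) r1 r2 <= G' by apply: J_le_G => //; apply/andP; split; nra.
  have : l0 * dl <= l * dl by rewrite ler_pM2r // ltW.
  lra.
rewrite gt_max; apply/andP; split.
  have : 0 < l0 * dl by rewrite mulr_gt0.
  lra.
lra.
Qed.


Section Chan.
Variable A : finType.
Variables a b : B -> R.
Hypothesis da : is_dist a.
Hypothesis db : is_dist b.

Definition Pt (t : R) (z : B) : R := t * a z + (1 - t) * b z.
Definition Chan (t : A -> R) : A -> B -> R := fun i z => Pt (t i) z.

Lemma Pt_dist t : 0 <= t <= 1 -> is_dist (Pt t).
Proof.
move=> /andP[t0 t1]; have [pa sa] := da; have [pb sb] := db.
split=> [z|]; first by rewrite /Pt addr_ge0 // mulr_ge0 // subr_ge0.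
by rewrite /Pt big_split /= -!mulr_sumr sa sb; ring.
Qed.

Lemma sum_ind (F : A -> R) j1 : \sum_i (i == j1)%:R * F i = F j1.
Proof.
rewrite (bigD1 j1) //= eqxx mul1r big1 ?addr0 // => i /negbTE ->.
by rewrite mul0r.
Qed.

Definition mu2 (j1 j2 : A) l : A -> R :=
  fun i => l * (i == j1)%:R + (1 - l) * (i == j2)%:R.

Lemma sum_mu2 j1 j2 l (F : A -> R) :
  \sum_i mu2 j1 j2 l i * F i = l * F j1 + (1 - l) * F j2.
Proof.
rewrite /mu2 (eq_bigr (fun i => l * ((i == j1)%:R * F i) + (1 - l) * ((i == j2)%:R * F i))).
  by rewrite big_split /= -!mulr_sumr !sum_ind.
by move=> i _; ring.
Qed.

Lemma mu2_dist j1 j2 l : 0 <= l <= 1 -> is_dist (mu2 j1 j2 l).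
Proof.
move=> /andP[l0 l1]; split=> [i|].
  by rewrite /mu2 addr_ge0 // mulr_ge0 // ?subr_ge0 // ler0n.
have := sum_mu2 j1 j2 l (fun _ => 1); rewrite (eq_bigr (mu2 j1 j2 l)) => [->|i _]; last by rewrite mulr1.
ring.
Qed.

Lemma mutinf_mu2 (W : A -> B -> R) j1 j2 l :
  mutinf (mu2 j1 j2 l) W = Jf l (W j1) (W j2).
Proof.
have eO : out_dist (mu2 j1 j2 l) W = Qf l (W j1) (W j2).
  by apply/funext => y; rewrite /out_dist sum_mu2.
rewrite /mutinf eO sum_mu2 /Jf /KL big_split /= -!mulr_sumr.
by [].
Qed.

Lemma mix_sum (mu al : A -> R) (X Y : R) : is_dist mu ->
  \sum_i mu i * (al i * X + (1 - al i) * Y) =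
  (\sum_i mu i * al i) * X + (1 - \sum_i mu i * al i) * Y.
Proof.
move=> [_ s1].
rewrite (eq_bigr (fun i => (mu i * al i) * (X - Y) + mu i * Y)); last by move=> i _; ring.
by rewrite big_split /= -!mulr_suml s1; ring.
Qed.

Lemma L_dom (t : A -> R) lo hi mu : 0 <= lo -> hi <= 1 -> lo <= hi ->
  (forall i, lo <= t i <= hi) -> is_dist mu ->
  exists l, 0 <= l <= 1 /\ mutinf mu (Chan t) <= Jf l (Pt lo) (Pt hi).
Proof.
move=> lo0 hi1 lohi ht dmu; have [pmu smu] := dmu.
set al := fun i => (hi - t i) / (hi - lo).
have hal : forall i, 0 <= al i <= 1 /\ t i = al i * lo + (1 - al i) * hi.
  move=> i; have /andP[h1 h2] := ht i.
  have [e|ne] := eqVneq hi lo.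
    rewrite /al e subrr invr0 mulr0; split; first by rewrite lexx ler01.
    by apply/eqP; rewrite eq_le; apply/andP; split; lra.
  have hp : 0 < hi - lo by rewrite lt_neqAle eq_sym subr_eq0 ne /=; lra.
  split.
    apply/andP; split; first by rewrite /al divr_ge0 //; lra.
    by rewrite /al ler_pdivrMr // mul1r; lra.
  by rewrite /al; field; rewrite lt0r_neq0.
have hP : forall i z, Pt (t i) z = al i * Pt lo z + (1 - al i) * Pt hi z.
  by move=> i z; rewrite /Pt (proj2 (hal i)); ring.
set l := \sum_i mu i * al i.
have l01 : 0 <= l <= 1.
  apply/andP; split; first by apply: sumr_ge0 => i _; rewrite mulr_ge0 //; case/andP: (proj1 (hal i)).
  rewrite -smu; apply: ler_sum => i _; rewrite -[leRHS]mulr1 ler_wpM2l //.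
  by case/andP: (proj1 (hal i)).
exists l; split => //.
have eO : out_dist mu (Chan t) = Qf l (Pt lo) (Pt hi).
  apply/funext => z; rewrite /out_dist /Chan.
  under eq_bigr do rewrite hP.
  by rewrite mix_sum.
rewrite /mutinf eO /KL /Jf.
apply: (@le_trans _ _ (\sum_i mu i * \sum_z (al i * hh (Qf l (Pt lo) (Pt hi) z) (Pt lo z)
          + (1 - al i) * hh (Qf l (Pt lo) (Pt hi) z) (Pt hi z)))).
  apply: ler_sum => i _; apply: ler_wpM2l => //; apply: ler_sum => z _.
  rewrite /Chan hP; apply: jensen_le.
  - by case: (Pt_dist lo _) => [|p _]; [apply/andP; split; lra|].
  - by case: (Pt_dist hi _) => [|p _]; [apply/andP; split; lra|].
  - exact: (proj1 (hal i)).
  - apply: Qf_ge0 => //.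
    + by case: (Pt_dist lo _) => [|p _]; [apply/andP; split; lra|].
    + by case: (Pt_dist hi _) => [|p _]; [apply/andP; split; lra|].
rewrite (eq_bigr (fun i => \sum_z mu i * (al i * hh (Qf l (Pt lo) (Pt hi) z) (Pt lo z)
          + (1 - al i) * hh (Qf l (Pt lo) (Pt hi) z) (Pt hi z)))); last by move=> i _; rewrite mulr_sumr.
rewrite exchange_big /=; apply: ler_sum => z _; rewrite mix_sum //.
Qed.

Lemma cap_le (t : A -> R) lo hi (i0 : A) : 0 <= lo -> hi <= 1 ->
  (forall i, lo <= t i <= hi) -> capacity (Chan t) <= Gf (Pt lo) (Pt hi).
Proof.
move=> lo0 hi1 ht.
have lohi : lo <= hi by case/andP: (ht i0) => h1 h2; exact: le_trans h1 h2.
rewrite /capacity; apply: ge_sup.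
  exists (mutinf (mu2 i0 i0 1) (Chan t)), (mu2 i0 i0 1) => //.
  by apply: mu2_dist; rewrite ler01 lexx.
move=> _ [mu dmu <-].
have [l [l01 H]] := L_dom _ _ _ _ lo0 hi1 lohi ht dmu.
apply: le_trans H _; apply: J_le_G => //; apply: Pt_dist; apply/andP; split; lra.
Qed.

Lemma cap_ub (t : A -> R) : (forall i, 0 <= t i <= 1) ->
  has_ubound [set mutinf mu (Chan t) | mu in [set mu : A -> R | is_dist mu]].
Proof.
move=> ht; exists 1 => _ [mu dmu <-].
have [l [l01 H]] := L_dom t 0 1 mu (lexx _) (lexx _) ler01 ht dmu.
apply: le_trans H _; apply: J_le1 => //; apply: Pt_dist; rewrite ?lexx ?ler01 //.
Qed.

Lemma cap_ge (t : A -> R) j1 j2 : (forall i, 0 <= t i <= 1) ->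
  Gf (Pt (t j1)) (Pt (t j2)) <= capacity (Chan t).
Proof.
move=> ht; apply: G_le => l l01.
rewrite (_ : Jf l (Pt (t j1)) (Pt (t j2)) = mutinf (mu2 j1 j2 l) (Chan t)); last first.
  by rewrite mutinf_mu2.
rewrite /capacity; have := ub_le_sup (cap_ub _ ht). rewrite /ubound /=. move=> H. apply: H.
by exists (mu2 j1 j2 l) => //; apply: mu2_dist.
Qed.

Lemma Pt_ne t1 t2 z0 : t1 != t2 -> a z0 != b z0 -> Pt t1 z0 != Pt t2 z0.
Proof.
move=> ne1 ne2; apply/negP => /eqP e.
have : (t1 - t2) * (a z0 - b z0) = Pt t1 z0 - Pt t2 z0 by rewrite /Pt; ring.
rewrite e subrr => /eqP; rewrite mulf_eq0 !subr_eq0 (negbTE ne1) (negbTE ne2).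
by [].
Qed.

Lemma Gt_lo lo' lo hi z0 : 0 <= lo' -> lo' < lo -> lo <= hi -> hi <= 1 -> a z0 != b z0 ->
  Gf (Pt lo) (Pt hi) < Gf (Pt lo') (Pt hi).
Proof.
move=> h0 h1 h2 h3 ne.
have d1 : is_dist (Pt lo') by apply: Pt_dist; apply/andP; split; lra.
have d2 : is_dist (Pt hi) by apply: Pt_dist; apply/andP; split; lra.
have ne' : Pt lo' z0 != Pt hi z0.
  by apply: Pt_ne => //; rewrite lt_eqF //; lra.
have [e|nel] := eqVneq lo hi.
  by rewrite e G_self; apply: Gpos ne'.
have hp : 0 < hi - lo by rewrite subr_gt0 lt_neqAle nel.
have hp' : 0 < hi - lo' by rewrite subr_gt0; lra.
apply: (Gstrict _ _ _ _ ((hi - lo) / (hi - lo')) d1 d2 ne').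
  apply/andP; split; first by rewrite divr_gt0.
  by rewrite ltr_pdivrMr // mul1r; lra.
by move=> z; rewrite /Pt; field; rewrite lt0r_neq0.
Qed.

Lemma Gt_hi lo hi hi' z0 : 0 <= lo -> lo <= hi -> hi < hi' -> hi' <= 1 -> a z0 != b z0 ->
  Gf (Pt lo) (Pt hi) < Gf (Pt lo) (Pt hi').
Proof.
move=> h0 h1 h2 h3 ne.
rewrite Gsym (Gsym (Pt lo)).
have d1 : is_dist (Pt hi') by apply: Pt_dist; apply/andP; split; lra.
have d2 : is_dist (Pt lo) by apply: Pt_dist; apply/andP; split; lra.
have ne' : Pt hi' z0 != Pt lo z0.
  by apply: Pt_ne => //; rewrite gt_eqF //; lra.
have [e|nel] := eqVneq lo hi.
  by rewrite -e G_self; apply: Gpos ne'.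
have hp : 0 < hi - lo by rewrite subr_gt0 lt_neqAle nel.
have hp' : 0 < hi' - lo by rewrite subr_gt0; lra.
apply: (Gstrict _ _ _ _ ((hi - lo) / (hi' - lo)) d1 d2 ne').
  apply/andP; split; first by rewrite divr_gt0.
  by rewrite ltr_pdivrMr // mul1r; lra.
by move=> z; rewrite /Pt; field; rewrite lt0r_neq0.
Qed.

End Chan.

End Aux.
Arguments Chan {R B A}.
Arguments Pt {R B}.
Arguments cap_le {R B A a b}.
Arguments cap_ge {R B A a b}.
Arguments Gt_lo {R B a b}.
Arguments Gt_hi {R B a b}.
Arguments Gf {R B}.

Lemma argmin_le (R : realType) (I : finType) (i0 : I) (f : I -> R) j :
  f (Order.arg_min i0 predT f) <= f j.
Proof. by case: (@arg_minP _ R I i0 predT f isT) => x _; apply. Qed.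
Lemma argmax_ge (R : realType) (I : finType) (i0 : I) (f : I -> R) j :
  f j <= f (Order.arg_max i0 predT f).
Proof. by case: (@arg_maxP _ R I i0 predT f isT) => x _; apply. Qed.
Lemma sum2 (R : realType) (F : 'I_2 -> R) : \sum_y F y = F ord0 + F ord_max.
Proof. rewrite !big_ord_recl big_ord0 addr0; congr (_ + F _); exact: val_inj. Qed.

Theorem theorem5 (R : realType) (m n : nat) (hm : (1 < m)%N) (hn : (1 < n)%N)
  (W' : 'I_m -> 'I_2 -> R) (W'' : 'I_2 -> 'I_n -> R)
  (hW' : is_channel W') (hW'' : is_channel W'')
  (hrows : exists z, W'' ord0 z <> W'' ord_max z)
  (S : finType) (pS : S -> R) (hpS : is_dist pS)
  (K : S -> 'I_m -> 'I_2 -> R) (hK : forall s, is_channel (K s))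
  (hmix : forall x y, W' x y = \sum_(s : S) pS s * K s x y) :
  let V : {ffun S -> 'I_m} -> 'I_n -> R :=
    fun u z => \sum_(y : 'I_2) (\sum_(s : S) pS s * K s (u s) y) * W'' y z in
  capacity V = capacity (chan_comp W' W'') <->
  exists i1 i2 : 'I_m, forall s, 0 < pS s -> ended (K s) i1 i2.
Proof.
move=> V.
set a := W'' ord0; set b := W'' ord_max.
have da : is_dist a := hW'' ord0.
have db : is_dist b := hW'' ord_max.
have [z0 hz0] := hrows; have ne : a z0 != b z0 by apply/eqP.
have [ppS spS] := hpS.
have K1 : forall s x, K s x ord_max = 1 - K s x ord0.
  by move=> s x; have [_ h] := hK s x; rewrite sum2 in h; rewrite -h; ring.
have K01 : forall s x, 0 <= K s x ord0 <= 1.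
  move=> s x; have [p _] := hK s x; apply/andP; split => //.
  by have := p ord_max; rewrite K1 subr_ge0.
set tW : 'I_m -> R := fun x => W' x ord0.
set tV : {ffun S -> 'I_m} -> R := fun u => \sum_s pS s * K s (u s) ord0.
have eW : chan_comp W' W'' = Chan a b tW.
  apply/funext => x; apply/funext => z.
  rewrite /chan_comp sum2 /Chan /Pt /tW.
  have [_ h] := hW' x; rewrite sum2 in h.
  rewrite (_ : W' x ord_max = 1 - W' x ord0); last by rewrite -h; ring.
  by [].
have eV : V = Chan a b tV.
  apply/funext => u; apply/funext => z.
  rewrite /V sum2 /Chan /Pt /tV.
  congr (_ * _ + _ * _).
  under eq_bigr do rewrite K1.
  rewrite (eq_bigr (fun s => pS s - pS s * K s (u s) ord0)); last by move=> s _; ring.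
  by rewrite sumrB spS.
have tVc : forall x, tV [ffun => x] = tW x.
  by move=> x; rewrite /tV /tW hmix; apply: eq_bigr => s _; rewrite ffunE.
have tV01 : forall u, 0 <= tV u <= 1.
  move=> u; apply/andP; split.
    by apply: sumr_ge0 => s _; rewrite mulr_ge0 //; case/andP: (K01 s (u s)).
  rewrite -spS; apply: ler_sum => s _; rewrite -[leRHS]mulr1 ler_wpM2l //.
  by case/andP: (K01 s (u s)).
have tW01 : forall x, 0 <= tW x <= 1 by move=> x; rewrite -tVc.
have x0 : 'I_m := Ordinal (ltnW hm).
rewrite eV eW; split.
- move=> hcap.
  have zt : forall (f g : S -> R), (forall s, f s <= g s) ->
      \sum_s pS s * f s = \sum_s pS s * g s -> forall s, 0 < pS s -> g s = f s.
    move=> f g fg e s ps.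
    have h1 : forall i, predT i -> 0 <= pS i * (g i - f i).
      by move=> i _; rewrite mulr_ge0 // subr_ge0.
    have h2 : \sum_(i | predT i) pS i * (g i - f i) = 0.
      by under eq_bigr do rewrite mulrBr; rewrite sumrB e subrr.
    have := @psumr_eq0P _ _ predT (fun s => pS s * (g s - f s)) h1 h2 s isT.
    move/eqP; rewrite mulf_eq0 (negbTE (lt0r_neq0 ps)) /= subr_eq0 => /eqP //.
  set xlo := Order.arg_min x0 predT tW; set xhi := Order.arg_max x0 predT tW.
  set ulo : {ffun S -> 'I_m} := [ffun s => Order.arg_min x0 predT (fun i => K s i ord0)].
  set uhi : {ffun S -> 'I_m} := [ffun s => Order.arg_max x0 predT (fun i => K s i ord0)].
  have hlo : forall x, tW xlo <= tW x by move=> x; apply: argmin_le.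
  have hhi : forall x, tW x <= tW xhi by move=> x; apply: argmax_ge.
  have hulo : forall s i, K s (ulo s) ord0 <= K s i ord0.
    by move=> s i; rewrite ffunE; exact: (argmin_le R _ x0 (fun i => K s i ord0) i).
  have huhi : forall s i, K s i ord0 <= K s (uhi s) ord0.
    by move=> s i; rewrite ffunE; exact: (argmax_ge R _ x0 (fun i => K s i ord0) i).
  have lole : tV ulo <= tW xlo.
    rewrite -tVc; apply: ler_sum => s _; rewrite ffunE ler_wpM2l //.
  have hile : tW xhi <= tV uhi.
    rewrite -tVc; apply: ler_sum => s _; rewrite ffunE ler_wpM2l //.
  have lo0 : 0 <= tW xlo by case/andP: (tW01 xlo).
  have hi1 : tW xhi <= 1 by case/andP: (tW01 xhi).
  have lohi : tW xlo <= tW xhi by apply: hhi.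
  have cW := cap_le da db tW _ _ x0 lo0 hi1 (fun x => introT andP (conj (hlo x) (hhi x))).
  have eqlo : tV ulo = tW xlo.
    apply/eqP; rewrite eq_le lole /= leNgt; apply/negP => hlt.
    have := Gt_lo da db (tV ulo) (tW xlo) (tW xhi) z0 (proj1 (andP (tV01 ulo))) hlt lohi hi1 ne.
    have := cap_ge da db tV ulo [ffun => xhi] tV01; rewrite tVc.
    lra.
  have eqhi : tV uhi = tW xhi.
    apply/eqP; rewrite eq_le hile andbT leNgt; apply/negP => hlt.
    have := Gt_hi da db (tW xlo) (tW xhi) (tV uhi) z0 lo0 lohi hlt (proj2 (andP (tV01 uhi))) ne.
    have := cap_ge da db tV [ffun => xlo] uhi tV01; rewrite tVc.
    lra.
  exists xlo, xhi => s ps; split => i.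
    have := zt (fun s => K s (ulo s) ord0) (fun s => K s xlo ord0) (fun s => hulo s xlo) _ s ps.
    move=> ->; first exact: hulo.
    by rewrite -/(tV ulo) eqlo /tW hmix.
  have := zt (fun s => K s xhi ord0) (fun s => K s (uhi s) ord0) (fun s => huhi s xhi) _ s ps.
  move=> <-; first exact: huhi.
  by rewrite -/(tV uhi) eqhi /tW hmix.
- move=> [i1 [i2 hend]].
  have Hlo : forall u, tW i1 <= tV u.
    move=> u; rewrite /tW hmix; apply: ler_sum => s _.
    have [e|pp] := eqVneq (pS s) 0; first by rewrite e !mul0r.
    have pp' : 0 < pS s by rewrite lt_neqAle eq_sym pp ppS.
    by rewrite ler_pM2l //; case: (hend s pp') => h _; apply: h.
  have Hhi : forall u, tV u <= tW i2.
    move=> u; rewrite /tW hmix; apply: ler_sum => s _.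
    have [e|pp] := eqVneq (pS s) 0; first by rewrite e !mul0r.
    have pp' : 0 < pS s by rewrite lt_neqAle eq_sym pp ppS.
    by rewrite ler_pM2l //; case: (hend s pp') => _ h; apply: h.
  have lo0 : 0 <= tW i1 by case/andP: (tW01 i1).
  have hi1 : tW i2 <= 1 by case/andP: (tW01 i2).
  apply/le_anti/andP; split.
    apply: le_trans (cap_le da db _ _ _ [ffun => x0] lo0 hi1 _) _.
      move=> u; apply/andP; split; [exact: (Hlo u) | exact: (Hhi u)].
    have := cap_ge da db tW i1 i2 tW01; by [].
  apply: le_trans (cap_le da db _ _ _ x0 lo0 hi1 _) _.
    by move=> x; apply/andP; split; [have := Hlo [ffun => x] | have := Hhi [ffun => x]]; rewrite tVc.
  have := cap_ge da db tV [ffun => i1] [ffun => i2] tV01; by rewrite !tVc.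
Qed.
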